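(* Let $X$ be a real Banach space, $f\in\Gamma_0(X)$, $S_f\ne\emptyset$, and $0<\varepsilon<|\partial f|_{\rm bd}$. Then for every $g\in\mathrm{Ptb}(f,\varepsilon)$ and every $u\in X$ with $g(u)>0$, every $x^*\in\partial g(u)$ satisfies $\|x^*\|\ge|\partial f|_{\rm bd}-\varepsilon$; consequently $\mathrm{Er}\{\mathrm{Ptb}(f,\varepsilon)\}\ge|\partial f|_{\rm bd}-\varepsilon>0$.
   Context: $\Gamma_0(X)$: proper convex lsc extended-real-valued functions on $X$. For convex $f$, $\partial f(x):=\{x^*\in X^*\mid \langle x^*,u-x\rangle\le f(u)-f(x)\ \forall u\in X\}$. $d(x,S)=\inf_{u\in S}\|u-x\|$, $d(x,\emptyset)=+\infty$, $\inf\emptyset=+\infty$. $S_f:=\{x\mid f(x)\le0\}$, $S_f^=:=\{x\mid f(x)=0\}$. $\mathrm{Er}\,g:=\inf_{g(x)>0}\frac{g(x)}{d(x,S_g)}$. $|\partial f|_{\rm bd}:=\inf_{f(x)=0} d(0,\mathrm{bd}\,\partial f(x))$. For $x\in S_f^=$, $\varepsilon,\delta\ge0$: $\tau(f,x,\varepsilon,\delta):=\inf_{u:\,f(u)\ge-\varepsilon\|u-x\|-\delta} d(0,\partial f(u))$ if $0\notin\mathrm{int}\,\partial f(x)$, and $:=d(0,\mathrm{bd}\,\partial f(x))$ if $0\in\mathrm{int}\,\partial f(x)$. $g\in\mathrm{Ptb}(f,\varepsilon)$ means: $S_g\ne\emptyset$, $g=f+p$ with $p:X\to\mathbb{R}$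 convex, and there exist $x\in S_f^=$ and $\xi\ge0$ with $\xi+|\partial f|_{\rm bd}-\tau(f,x,\xi,|p(x)|)\le\varepsilon$ and $|p(u)-p(x)|\le\xi\|u-x\|$ for all $u\in X$. $\mathrm{Er}\{\mathrm{Ptb}(f,\varepsilon)\}:=\inf_{g\in\mathrm{Ptb}(f,\varepsilon)}\mathrm{Er}\,g$. *)

(* Defs.v *)
From Stdlib Require Import Reals Lra Classical ClassicalEpsilon.
Open Scope R_scope.

Record Banach := {
  carrier :> Type;
  vzero : carrier;
  vadd : carrier -> carrier -> carrier;
  vopp : carrier -> carrier;
  vscal : R -> carrier -> carrier;
  vnorm : carrier -> R;
  vadd_assoc : forall x y z, vadd x (vadd y z) = vadd (vadd x y) z;
  vadd_comm : forall x y, vadd x y = vadd y x;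
  vadd_zero : forall x, vadd x vzero = x;
  vadd_opp : forall x, vadd x (vopp x) = vzero;
  vscal_assoc : forall a b x, vscal a (vscal b x) = vscal (a * b) x;
  vscal_one : forall x, vscal 1 x = x;
  vscal_distr_l : forall a x y, vscal a (vadd x y) = vadd (vscal a x) (vscal a y);
  vscal_distr_r : forall a b x, vscal (a + b) x = vadd (vscal a x) (vscal b x);
  vnorm_nonneg : forall x, 0 <= vnorm x;
  vnorm_eq0 : forall x, vnorm x = 0 <-> x = vzero;
  vnorm_scal : forall a x, vnorm (vscal a x) = Rabs a * vnorm x;
  vnorm_triangle : forall x y, vnorm (vadd x y) <= vnorm x + vnorm y;
  vcomplete : forall s : nat -> carrier,
      (forall e, 0 < e -> exists N, forall m n, (N <= m)%nat -> (N <= n)%nat ->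
          vnorm (vadd (s m) (vopp (s n))) < e) ->
      exists l, forall e, 0 < e -> exists N, forall n, (N <= n)%nat ->
          vnorm (vadd (s n) (vopp l)) < e
}.

Arguments vzero {_}. Arguments vadd {_}. Arguments vopp {_}.
Arguments vscal {_}. Arguments vnorm {_}.

Definition vsub {X : Banach} (x y : X) : X := vadd x (vopp y).

Inductive ER := Fin (r : R) | PInf.

Definition ele (a b : ER) : Prop :=
  match a, b with
  | _, PInf => True
  | PInf, Fin _ => False
  | Fin x, Fin y => x <= y
  end.
Definition elt (a b : ER) : Prop :=
  match a, b with
  | PInf, _ => False
  | Fin _, PInf => True
  | Fin x, Fin y => x < y
  end.
Definition eaddR (a : ER) (r : R) : ER :=
  match a with Fin x => Fin (x + r) | PInf => PInf end.
Definition esubR (a : ER) (r : R) : ER := eaddR a (- r).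

(** Infimum in [-oo?,+oo]: the greatest lower bound in ER; inf of the empty set
    is +oo.  (All sets used below are bounded below by 0, so the glb exists.) *)
Definition is_einf (E : ER -> Prop) (m : ER) : Prop :=
  (forall y, E y -> ele m y) /\
  (forall m', (forall y, E y -> ele m' y) -> ele m' m).

Definition einf (E : ER -> Prop) : ER :=
  match excluded_middle_informative (exists m, is_einf E m) with
  | left h => proj1_sig (constructive_indefinite_description _ h)
  | right _ => PInf
  end.

Definition dist {X : Banach} (x : X) (S : X -> Prop) : ER :=
  einf (fun y => exists u, S u /\ y = Fin (vnorm (vsub u x))).

Definition is_dual {X : Banach} (phi : X -> R) : Prop :=
  (forall x y, phi (vadd x y) = phi x + phi y) /\
  (forall a x, phi (vscal a x) = a * phi x) /\
  (exists c, forall x, Rabs (phi x) <= c * vnorm x).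

Definition dnorm {X : Banach} (phi : X -> R) : ER :=
  einf (fun y => exists c, y = Fin c /\ 0 <= c /\
                    forall x, Rabs (phi x) <= c * vnorm x).

Definition dsub {X : Banach} (psi phi : X -> R) : X -> R := fun u => psi u - phi u.
Definition dzero {X : Banach} : X -> R := fun _ => 0.

Definition dinterior {X : Banach} (A : (X -> R) -> Prop) (phi : X -> R) : Prop :=
  is_dual phi /\ exists r, 0 < r /\
    forall psi, is_dual psi -> elt (dnorm (dsub psi phi)) (Fin r) -> A psi.
Definition dclosure {X : Banach} (A : (X -> R) -> Prop) (phi : X -> R) : Prop :=
  is_dual phi /\ forall r, 0 < r ->
    exists psi, A psi /\ elt (dnorm (dsub psi phi)) (Fin r).
Definition dboundary {X : Banach} (A : (X -> R) -> Prop) (phi : X -> R) : Prop :=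
  dclosure A phi /\ ~ dinterior A phi.

Definition ddist0 {X : Banach} (A : (X -> R) -> Prop) : ER :=
  einf (fun y => exists phi, A phi /\ y = dnorm phi).

Definition proper {X : Banach} (f : X -> ER) : Prop := exists x, f x <> PInf.
Definition convexE {X : Banach} (f : X -> ER) : Prop :=
  forall x y fx fy t, f x = Fin fx -> f y = Fin fy -> 0 <= t <= 1 ->
    ele (f (vadd (vscal t x) (vscal (1 - t) y))) (Fin (t * fx + (1 - t) * fy)).
Definition lscE {X : Banach} (f : X -> ER) : Prop :=
  forall x c, elt (Fin c) (f x) ->
    exists d, 0 < d /\ forall u, vnorm (vsub u x) < d -> elt (Fin c) (f u).
Definition Gamma0 {X : Banach} (f : X -> ER) : Prop :=
  proper f /\ convexE f /\ lscE f.

Definition convexR {X : Banach} (p : X -> R) : Prop :=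
  forall x y t, 0 <= t <= 1 ->
    p (vadd (vscal t x) (vscal (1 - t) y)) <= t * p x + (1 - t) * p y.

Definition subdiff {X : Banach} (f : X -> ER) (x : X) (phi : X -> R) : Prop :=
  is_dual phi /\ exists fx, f x = Fin fx /\
    forall u, match f u with
              | Fin fu => phi (vsub u x) <= fu - fx
              | PInf => True
              end.

Definition sublevel {X : Banach} (f : X -> ER) (x : X) : Prop := ele (f x) (Fin 0).

(** a / d with a > 0 real and d in [0,+oo]: a/0 = +oo, a/+oo = 0 *)
Definition ediv (a : R) (d : ER) : ER :=
  match d with
  | PInf => Fin 0
  | Fin r => if Rlt_dec 0 r then Fin (a / r) else PInf
  end.

Definition Er {X : Banach} (g : X -> ER) : ER :=
  einf (fun y => exists x gx, g x = Fin gx /\ 0 < gx /\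
                              y = ediv gx (dist x (sublevel g))).

Definition bdsub {X : Banach} (f : X -> ER) : ER :=
  einf (fun y => exists x, f x = Fin 0 /\ y = ddist0 (dboundary (subdiff f x))).

Definition tau {X : Banach} (f : X -> ER) (x : X) (eps delta : R) : ER :=
  match excluded_middle_informative (dinterior (subdiff f x) dzero) with
  | left _ => ddist0 (dboundary (subdiff f x))
  | right _ => einf (fun y => exists u,
        ele (Fin (- eps * vnorm (vsub u x) - delta)) (f u) /\
        y = ddist0 (subdiff f u))
  end.

(** the inequality  xi + |df|_bd - tau <= eps  in extended arithmetic:
    +oo - (anything) is not <= eps, and b - (+oo) = -oo <= eps for b finite *)
Definition ptb_ineq (xi : R) (b t : ER) (eps : R) : Prop :=
  match b with
  | PInf => False
  | Fin b' => match t with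
              | PInf => True
              | Fin t' => xi + b' - t' <= eps
              end
  end.

Definition Ptb {X : Banach} (f : X -> ER) (eps : R) (g : X -> ER) : Prop :=
  (exists x, sublevel g x) /\
  exists p : X -> R, convexR p /\ (forall u, g u = eaddR (f u) (p u)) /\
  exists x xi, f x = Fin 0 /\ 0 <= xi /\
    ptb_ineq xi (bdsub f) (tau f x xi (Rabs (p x))) eps /\
    forall u, Rabs (p u - p x) <= xi * vnorm (vsub u x).

Definition ErPtb {X : Banach} (f : X -> ER) (eps : R) : ER :=
  einf (fun y => exists g, Ptb f eps g /\ y = Er g).

(* Main.v *)
Require Import Defs.
From Stdlib Require Import Reals Lra Lia Classical ClassicalEpsilon FunctionalExtensionality List.
From mathcomp Require boolp classical_sets.
Set Bullet Behavior "Strict Subproofs".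
Open Scope R_scope.

Arguments vadd_assoc {_}. Arguments vadd_comm {_}. Arguments vadd_zero {_}. Arguments vadd_opp {_}.
Arguments vscal_assoc {_}. Arguments vscal_one {_}. Arguments vscal_distr_l {_}. Arguments vscal_distr_r {_}.
Arguments vnorm_nonneg {_}. Arguments vnorm_eq0 {_}. Arguments vnorm_scal {_}. Arguments vnorm_triangle {_}.
Arguments vcomplete {_}.

Inductive vexp := VAtom (n : nat) | VZero | VAdd (a b : vexp) | VOpp (a : vexp) | VScal (r : R) (a : vexp).

Fixpoint veval {X : Banach} (env : list X) (e : vexp) : X :=
  match e with
  | VAtom n => nth n env vzero
  | VZero => vzero
  | VAdd a b => vadd (veval env a) (veval env b)
  | VOpp a => vopp (veval env a)
  | VScal r a => vscal r (veval env a)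
  end.

Fixpoint ladd (l1 l2 : list R) : list R :=
  match l1, l2 with
  | nil, _ => l2
  | _, nil => l1
  | a :: l1', b :: l2' => (a + b) :: ladd l1' l2'
  end.

Fixpoint vnf (e : vexp) : list R :=
  match e with
  | VAtom n => repeat 0 n ++ (1 :: nil)
  | VZero => nil
  | VAdd a b => ladd (vnf a) (vnf b)
  | VOpp a => map (fun c => - c) (vnf a)
  | VScal r a => map (fun c => r * c) (vnf a)
  end.

Fixpoint lcombL {X : Banach} (env : list X) (l : list R) : X :=
  match env, l with
  | v :: env', c :: l' => vadd (vscal c v) (lcombL env' l')
  | _, _ => vzero
  end.

Lemma vadd_0l {X : Banach} (x : X) : vadd vzero x = x.
Proof. rewrite vadd_comm. apply vadd_zero. Qed.

Lemma vadd_cancel {X : Banach} (a b c : X) : vadd a b = vadd a c -> b = c.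
Proof.
  intro H. assert (H2 : vadd (vopp a) (vadd a b) = vadd (vopp a) (vadd a c)) by now rewrite H.
  rewrite !vadd_assoc in H2. rewrite (vadd_comm (vopp a) a), vadd_opp, !vadd_0l in H2. exact H2.
Qed.

Lemma vscal_0 {X : Banach} (x : X) : vscal 0 x = vzero.
Proof.
  apply (vadd_cancel (vscal 0 x)). rewrite vadd_zero, <- vscal_distr_r. now rewrite Rplus_0_r.
Qed.

Lemma vscal_zero {X : Banach} (a : R) : vscal a (@vzero X) = vzero.
Proof.
  apply (vadd_cancel (vscal a vzero)). rewrite vadd_zero, <- vscal_distr_l. now rewrite vadd_zero.
Qed.

Lemma vopp_scal {X : Banach} (x : X) : vopp x = vscal (-1) x.
Proof.
  apply (vadd_cancel x). rewrite vadd_opp.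
  assert (E : vadd x (vscal (-1) x) = vscal (1 + -1) x) by (now rewrite vscal_distr_r, vscal_one).
  rewrite E. replace (1 + -1) with 0 by ring. now rewrite vscal_0.
Qed.

Lemma vadd_swap4 {X : Banach} (a b c d : X) : vadd (vadd a b) (vadd c d) = vadd (vadd a c) (vadd b d).
Proof.
  rewrite <- !vadd_assoc. f_equal. rewrite !vadd_assoc. f_equal. apply vadd_comm.
Qed.

Lemma lcombL_nil {X : Banach} (env : list X) : lcombL env nil = vzero.
Proof. destruct env; reflexivity. Qed.

Lemma lcombL_add {X : Banach} (env : list X) l1 l2 :
  lcombL env (ladd l1 l2) = vadd (lcombL env l1) (lcombL env l2).
Proof.
  revert l1 l2; induction env as [|v env IH]; intros l1 l2; simpl.
  - destruct l1, l2; simpl; now rewrite vadd_zero.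
  - destruct l1 as [|a l1], l2 as [|b l2]; simpl.
    + now rewrite vadd_zero.
    + now rewrite vadd_0l.
    + now rewrite vadd_zero.
    + rewrite IH, vscal_distr_r. apply vadd_swap4.
Qed.

Lemma lcombL_map {X : Banach} (env : list X) (r : R) l :
  lcombL env (map (fun c => r * c) l) = vscal r (lcombL env l).
Proof.
  revert l; induction env as [|v env IH]; intros l; simpl.
  - destruct l; now rewrite vscal_zero.
  - destruct l as [|a l]; simpl. now rewrite vscal_zero.
    rewrite IH, vscal_distr_l, vscal_assoc. reflexivity.
Qed.

Lemma lcombL_opp {X : Banach} (env : list X) l :
  lcombL env (map (fun c => - c) l) = vopp (lcombL env l).
Proof.
  rewrite vopp_scal, <- lcombL_map. f_equal. apply map_ext. intro; ring.
Qed.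

Lemma lcombL_atom {X : Banach} (env : list X) n :
  lcombL env (repeat 0 n ++ (1 :: nil)) = nth n env vzero.
Proof.
  revert n; induction env as [|v env IH]; intros n; simpl.
  - destruct n; reflexivity.
  - destruct n as [|n]; simpl.
    + rewrite vscal_one, lcombL_nil. apply vadd_zero.
    + rewrite IH, vscal_0. apply vadd_0l.
Qed.

Lemma veval_nf {X : Banach} (env : list X) e : veval env e = lcombL env (vnf e).
Proof.
  induction e; simpl.
  - now rewrite lcombL_atom.
  - now rewrite lcombL_nil.
  - now rewrite lcombL_add, IHe1, IHe2.
  - now rewrite lcombL_opp, IHe.
  - now rewrite lcombL_map, IHe.
Qed.

Fixpoint allz (l : list R) : Prop :=
  match l with nil => True | a :: l' => a = 0 /\ allz l' end.

Fixpoint req (l1 l2 : list R) : Prop :=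
  match l1 with
  | nil => allz l2
  | a :: l1' => match l2 with
                | nil => a = 0 /\ allz l1'
                | b :: l2' => a = b /\ req l1' l2'
                end
  end.

Lemma lcombL_zero {X : Banach} (env : list X) l : allz l -> lcombL env l = vzero.
Proof.
  revert l; induction env as [|v env IH]; intros l H; simpl. reflexivity.
  destruct l as [|a l]. reflexivity. simpl in H. destruct H as [-> H].
  rewrite vscal_0, IH by exact H. apply vadd_zero.
Qed.

Lemma req_sound {X : Banach} (env : list X) l1 l2 : req l1 l2 -> lcombL env l1 = lcombL env l2.
Proof.
  revert l1 l2; induction env as [|v env IH]; intros l1 l2 H; simpl. reflexivity.
  destruct l1 as [|a l1], l2 as [|b l2]; simpl in H.
  - reflexivity.
  - destruct H as [-> H]. rewrite vscal_0, vadd_0l. symmetry. apply lcombL_zero. exact H.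
  - destruct H as [-> H]. rewrite vscal_0, vadd_0l. apply lcombL_zero. exact H.
  - destruct H as [-> H]. f_equal. now apply IH.
Qed.

Ltac vlookup x l :=
  match l with
  | x :: _ => constr:(0%nat)
  | _ :: ?l' => let n := vlookup x l' in constr:(S n)
  end.

Ltac vatoms t env :=
  match t with
  | vzero => env
  | vadd ?a ?b => let e1 := vatoms a env in vatoms b e1
  | vsub ?a ?b => let e1 := vatoms a env in vatoms b e1
  | vopp ?a => vatoms a env
  | vscal _ ?a => vatoms a env
  | _ => match env with
         | context [t] => env
         | _ => constr:(t :: env)
         end
  end.

Ltac vreify env t :=
  match t with
  | vzero => constr:(VZero)
  | vadd ?a ?b => let ra := vreify env a in let rb := vreify env b in constr:(VAdd ra rb)
  | vsub ?a ?b => let ra := vreify env a in let rb := vreify env b in constr:(VAdd ra (VOpp rb))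
  | vopp ?a => let ra := vreify env a in constr:(VOpp ra)
  | vscal ?r ?a => let ra := vreify env a in constr:(VScal r ra)
  | _ => let n := vlookup t env in constr:(VAtom n)
  end.

Ltac vring :=
  match goal with
  | |- @eq (carrier ?X) ?a ?b =>
    let e0 := vatoms a (@nil (carrier X)) in
    let env := vatoms b e0 in
    let ra := vreify env a in
    let rb := vreify env b in
    change (veval env ra = veval env rb);
    rewrite !veval_nf; apply req_sound; simpl; repeat split; try ring
  end.


Lemma vnorm_zero {X : Banach} : vnorm (@vzero X) = 0.
Proof. apply vnorm_eq0. reflexivity. Qed.

Lemma vnorm_opp {X : Banach} (x : X) : vnorm (vopp x) = vnorm x.
Proof. rewrite vopp_scal, vnorm_scal. replace (Rabs (-1)) with 1. ring. rewrite Rabs_left by lra. ring. Qed.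

Lemma vnorm_sub_sym {X : Banach} (x y : X) : vnorm (vsub x y) = vnorm (vsub y x).
Proof. replace (vsub x y) with (vopp (vsub y x)) by vring. apply vnorm_opp. Qed.

Lemma vnorm_sub_tri {X : Banach} (x y z : X) : vnorm (vsub x z) <= vnorm (vsub x y) + vnorm (vsub y z).
Proof. replace (vsub x z) with (vadd (vsub x y) (vsub y z)) by vring. apply vnorm_triangle. Qed.

Lemma vnorm_rev {X : Banach} (x y : X) : vnorm x - vnorm y <= vnorm (vsub x y).
Proof.
  assert (H := vnorm_triangle (vsub x y) y). replace (vadd (vsub x y) y) with x in H by vring. lra.
Qed.

Lemma vsub_eq0 {X : Banach} (x y : X) : vnorm (vsub x y) = 0 -> x = y.
Proof.
  intro H. apply vnorm_eq0 in H.
  replace x with (vadd (vsub x y) y) by vring. rewrite H. apply vadd_0l.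
Qed.

Lemma vnorm_sub_zero {X : Banach} (x : X) : vnorm (vsub x x) = 0.
Proof. replace (vsub x x) with (@vzero X) by vring. apply vnorm_zero. Qed.

Definition linf {X : Banach} (phi : X -> R) : Prop :=
  (forall x y, phi (vadd x y) = phi x + phi y) /\ (forall a x, phi (vscal a x) = a * phi x).

Lemma dual_lin {X : Banach} (phi : X -> R) : is_dual phi -> linf phi.
Proof. intros [H1 [H2 _]]. split; assumption. Qed.

Lemma lin_zero {X : Banach} (phi : X -> R) : linf phi -> phi vzero = 0.
Proof. intros [_ H]. rewrite <- (vscal_0 (@vzero X)), H. ring. Qed.

Lemma lin_opp {X : Banach} (phi : X -> R) x : linf phi -> phi (vopp x) = - phi x.
Proof. intros [_ H]. rewrite vopp_scal, H. ring. Qed.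

Lemma lin_sub {X : Banach} (phi : X -> R) x y : linf phi -> phi (vsub x y) = phi x - phi y.
Proof. intros L. unfold vsub. rewrite (proj1 L), lin_opp by exact L. ring. Qed.

Lemma lin_add {X : Banach} (phi : X -> R) x y : linf phi -> phi (vadd x y) = phi x + phi y.
Proof. intros L. apply (proj1 L). Qed.

Lemma lin_scal {X : Banach} (phi : X -> R) a x : linf phi -> phi (vscal a x) = a * phi x.
Proof. intros L. apply (proj2 L). Qed.

Lemma ele_trans a b c : ele a b -> ele b c -> ele a c.
Proof. destruct a, b, c; simpl; try tauto; lra. Qed.

Lemma ele_antisym a b : ele a b -> ele b a -> a = b.
Proof. destruct a, b; simpl; try tauto. intros; f_equal; lra. Qed.

Lemma einf_exists (E : ER -> Prop) : (forall y, E y -> ele (Fin 0) y) -> exists m, is_einf E m.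
Proof.
  intros H0.
  destruct (classic (exists r, E (Fin r))) as [[r0 Hr0]|HN].
  - set (F := fun x => E (Fin (- x))).
    assert (Hb : bound F). { exists 0. intros x Hx. specialize (H0 _ Hx). simpl in H0. lra. }
    assert (He : exists x, F x). { exists (- r0). unfold F. now rewrite Ropp_involutive. }
    destruct (completeness F Hb He) as [l [Hl1 Hl2]].
    exists (Fin (- l)). split.
    + intros y Hy. destruct y as [r|]; simpl; [|trivial].
      assert (F (- r)) by (unfold F; now rewrite Ropp_involutive).
      specialize (Hl1 _ H). lra.
    + intros m' Hm'. destruct m' as [c|].
      * simpl. assert (l <= - c). { apply Hl2. intros x Hx. specialize (Hm' _ Hx). simpl in Hm'. lra. }
        lra.
      * specialize (Hm' _ Hr0). simpl in Hm'. contradiction.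
  - exists PInf. split.
    + intros y Hy. destruct y; simpl; trivial. apply HN. eauto.
    + intros; destruct m'; simpl; trivial.
Qed.

Lemma einf_spec (E : ER -> Prop) : (forall y, E y -> ele (Fin 0) y) -> is_einf E (einf E).
Proof.
  intros H0. unfold einf. destruct (excluded_middle_informative _) as [h|h].
  - exact (proj2_sig (constructive_indefinite_description _ h)).
  - exfalso. apply h. now apply einf_exists.
Qed.

Lemma einf_le (E : ER -> Prop) y : (forall y, E y -> ele (Fin 0) y) -> E y -> ele (einf E) y.
Proof. intros H0 Hy. exact (proj1 (einf_spec E H0) y Hy). Qed.

Lemma einf_ge (E : ER -> Prop) m : (forall y, E y -> ele (Fin 0) y) -> (forall y, E y -> ele m y) -> ele m (einf E).
Proof. intros H0 Hm. exact (proj2 (einf_spec E H0) m Hm). Qed.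

Lemma einf_ge0 (E : ER -> Prop) : (forall y, E y -> ele (Fin 0) y) -> ele (Fin 0) (einf E).
Proof. intros H0. now apply einf_ge. Qed.

Lemma dual_zero_at {X : Banach} (phi : X -> R) (x : X) : is_dual phi -> vnorm x = 0 -> phi x = 0.
Proof.
  intros D H. apply vnorm_eq0 in H. subst. apply lin_zero, dual_lin, D.
Qed.

Lemma dnorm_spec {X : Banach} (phi : X -> R) : is_dual phi ->
  exists c, dnorm phi = Fin c /\ 0 <= c /\ (forall x, Rabs (phi x) <= c * vnorm x) /\
    (forall c', 0 <= c' -> (forall x, Rabs (phi x) <= c' * vnorm x) -> c <= c').
Proof.
  intros D. set (E := fun y => exists c, y = Fin c /\ 0 <= c /\ forall x, Rabs (phi x) <= c * vnorm x).
  assert (H0 : forall y, E y -> ele (Fin 0) y). { intros y [c [-> [Hc _]]]. exact Hc. }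
  pose proof (einf_spec E H0) as [S1 S2].
  destruct D as [La [Lb [c0 Hc0]]].
  assert (Ec : E (Fin (Rmax c0 0))).
  { exists (Rmax c0 0). split; [reflexivity|]. split; [apply Rmax_r|].
    intros x. eapply Rle_trans; [apply Hc0|]. apply Rmult_le_compat_r; [apply vnorm_nonneg|apply Rmax_l]. }
  unfold dnorm. fold E.
  destruct (einf E) as [c|] eqn:HE.
  2: { specialize (S1 _ Ec). simpl in S1. contradiction. }
  exists c. split; [reflexivity|].
  assert (Hc : 0 <= c) by (exact (S2 (Fin 0) H0)).
  split; [exact Hc|]. split.
  - intros x. destruct (Req_dec (vnorm x) 0) as [Hn|Hn].
    + rewrite Hn. assert (phi x = 0) by (apply dual_zero_at; [split; [|split]; eauto|exact Hn]).
      rewrite H, Rabs_R0. lra.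
    + assert (Hp : 0 < vnorm x) by (pose proof (vnorm_nonneg x); lra).
      destruct (Rle_dec (Rabs (phi x)) (c * vnorm x)) as [ok|nok]; [exact ok|exfalso].
      assert (Hlb : ele (Fin (Rabs (phi x) / vnorm x)) (Fin c)).
      { apply S2. intros y [c' [-> [Hc' Hb]]]. simpl. specialize (Hb x).
        apply Rmult_le_reg_r with (vnorm x); [exact Hp|]. unfold Rdiv. rewrite Rmult_assoc, Rinv_l by lra. lra. }
      simpl in Hlb. apply nok. apply Rmult_le_reg_r with (/ vnorm x). apply Rinv_0_lt_compat; exact Hp.
      rewrite Rmult_assoc, Rinv_r by lra. unfold Rdiv in Hlb. lra.
  - intros c' Hc' Hb. exact (S1 (Fin c') (ex_intro _ c' (conj eq_refl (conj Hc' Hb)))).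
Qed.

Lemma zorn_pre (T : Type) (t0 : T) (le : T -> T -> Prop) :
  (forall t, le t t) -> (forall r s t, le r s -> le s t -> le r t) ->
  (forall A : T -> Prop, (forall s t, A s -> A t -> le s t \/ le t s) -> exists t, forall s, A s -> le s t) ->
  exists t, forall s, le t s -> le s t.
Proof.
  intros Hr Ht Hc.
  destruct (@classical_sets.ZL_preorder T t0 (fun a b => boolp.asbool (le a b))) as [t Htm].
  - intros t. apply boolp.asboolT, Hr.
  - intros r s t H1 H2. apply boolp.asboolT. apply boolp.asboolW in H1, H2. eauto.
  - intros A HA. destruct (Hc A) as [t Ht']. 
    + intros s t As At. destruct (HA s t As At) as [H|H]; [left|right]; now apply boolp.asboolW.
    + exists t. intros s As. now apply boolp.asboolT, Ht'.
  - exists t. intros s Hs. apply boolp.asboolW. apply Htm. now apply boolp.asboolT.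
Qed.

Definition subsp {X : Banach} (D : X -> Prop) : Prop :=
  D vzero /\ (forall v w, D v -> D w -> D (vadd v w)) /\ (forall r v, D v -> D (vscal r v)).

Definition hbvalid {X : Banach} {A : Type} (Dom : A -> Prop) (Phi : X -> A -> R)
  (p : (X -> Prop) * (X -> R)) : Prop :=
  subsp (fst p) /\
  (forall v w, fst p v -> fst p w -> snd p (vadd v w) = snd p v + snd p w) /\
  (forall r v, fst p v -> snd p (vscal r v) = r * snd p v) /\
  (forall m a, fst p m -> Dom a -> snd p m <= Phi m a).

Definition hble {X : Banach} (p q : (X -> Prop) * (X -> R)) : Prop :=
  (forall v, fst p v -> fst q v) /\ (forall v, fst p v -> snd p v = snd q v).

Lemma div_le_div (a b s t : R) : 0 < s -> 0 < t -> t * a <= s * b -> a / s <= b / t.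
Proof.
  intros Hs Ht H. unfold Rdiv.
  apply Rmult_le_reg_l with (s * t). nra.
  replace (s * t * (a * / s)) with (t * a) by (field; lra).
  replace (s * t * (b * / t)) with (s * b) by (field; lra). exact H.
Qed.

Lemma hb_step {X : Banach} {A : Type} (Dom : A -> Prop) (cmb : R -> A -> A -> A) (Phi : X -> A -> R) (a0 : A)
  (Ha0 : Dom a0)
  (Hcmb : forall l a1 a2, 0 <= l <= 1 -> Dom a1 -> Dom a2 -> Dom (cmb l a1 a2))
  (Hcvx : forall l m1 m2 a1 a2, 0 <= l <= 1 -> Dom a1 -> Dom a2 ->
     Phi (vadd (vscal l m1) (vscal (1-l) m2)) (cmb l a1 a2) <= l * Phi m1 a1 + (1-l) * Phi m2 a2)
  (p : (X -> Prop) * (X -> R)) (e : X) :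
  hbvalid Dom Phi p -> ~ fst p e ->
  exists q, hbvalid Dom Phi q /\ hble p q /\ fst q e.
Proof.
  destruct p as [D z]. intros [[D0 [Dadd Dscal]] [zadd [zscal zdom]]] He. simpl in *.
  assert (Dopp : forall v, D v -> D (vopp v)) by (intros v Hv; rewrite vopp_scal; auto).
  assert (Dsub : forall v w, D v -> D w -> D (vsub v w)) by (intros; unfold vsub; auto).
  assert (key : forall m1 m2 s t a1 a2, D m1 -> D m2 -> 0 < s -> 0 < t -> Dom a1 -> Dom a2 ->
     (z m1 - Phi (vadd m1 (vscal (-s) e)) a1) / s <= (Phi (vadd m2 (vscal t e)) a2 - z m2) / t).
  { intros m1 m2 s t a1 a2 Hm1 Hm2 Hs Ht Ha1 Ha2.
    apply div_le_div; [exact Hs|exact Ht|].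
    set (l := t / (s + t)).
    assert (Hl : 0 <= l <= 1). { unfold l. split. unfold Rdiv. apply Rmult_le_pos; [lra|]. left; apply Rinv_0_lt_compat; lra.
      apply Rmult_le_reg_r with (s + t); [lra|]. unfold Rdiv. rewrite Rmult_assoc, Rinv_l by lra. lra. }
    pose proof (Hcvx l (vadd m1 (vscal (-s) e)) (vadd m2 (vscal t e)) a1 a2 Hl Ha1 Ha2) as C.
    replace (vadd (vscal l (vadd m1 (vscal (- s) e))) (vscal (1 - l) (vadd m2 (vscal t e))))
      with (vadd (vscal l m1) (vscal (1 - l) m2)) in C by (vring; unfold l; field; lra).
    assert (Dm : D (vadd (vscal l m1) (vscal (1 - l) m2))) by auto.
    pose proof (zdom _ _ Dm (Hcmb l a1 a2 Hl Ha1 Ha2)) as C2.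
    rewrite zadd, !zscal in C2 by auto.
    assert (E : l * z m1 + (1 - l) * z m2 <= l * Phi (vadd m1 (vscal (- s) e)) a1 + (1 - l) * Phi (vadd m2 (vscal t e)) a2) by lra.
    apply Rmult_le_compat_l with (r := s + t) in E; [|lra].
    replace ((s + t) * (l * z m1 + (1 - l) * z m2)) with (t * z m1 + s * z m2) in E by (unfold l; field; lra).
    replace ((s + t) * (l * Phi (vadd m1 (vscal (- s) e)) a1 + (1 - l) * Phi (vadd m2 (vscal t e)) a2))
      with (t * Phi (vadd m1 (vscal (- s) e)) a1 + s * Phi (vadd m2 (vscal t e)) a2) in E by (unfold l; field; lra).
    lra. }
  set (S := fun r => exists m s a, D m /\ 0 < s /\ Dom a /\ r = (z m - Phi (vadd m (vscal (-s) e)) a) / s).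
  assert (Sb : bound S).
  { exists ((Phi (vadd vzero (vscal 1 e)) a0 - z vzero) / 1). intros r [m [s [a [Hm [Hs [Ha ->]]]]]].
    apply key; auto; lra. }
  assert (Sne : exists r, S r).
  { exists ((z vzero - Phi (vadd vzero (vscal (-1) e)) a0) / 1). exists vzero, 1, a0. repeat split; auto; lra. }
  destruct (completeness S Sb Sne) as [c [Hc1 Hc2]].
  assert (ci : forall m s a, D m -> 0 < s -> Dom a -> (z m - Phi (vadd m (vscal (-s) e)) a) / s <= c).
  { intros m s a Hm Hs Ha. apply Hc1. exists m, s, a. auto. }
  assert (cii : forall m t a, D m -> 0 < t -> Dom a -> c <= (Phi (vadd m (vscal t e)) a - z m) / t).
  { intros m t a Hm Ht Ha. apply Hc2. intros r [m1 [s [a1 [Hm1 [Hs [Ha1 ->]]]]]]. apply key; auto. }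
  assert (uniq : forall m1 m2 t1 t2, D m1 -> D m2 -> vadd m1 (vscal t1 e) = vadd m2 (vscal t2 e) -> t1 = t2 /\ m1 = m2).
  { intros m1 m2 t1 t2 Hm1 Hm2 H.
    assert (E1 : vsub m1 m2 = vscal (t2 - t1) e).
    { transitivity (vadd (vsub (vadd m1 (vscal t1 e)) m2) (vscal (-t1) e)); [vring|].
      rewrite H. vring. }
    destruct (Req_dec t1 t2) as [Ht|Ht].
    - split; [exact Ht|]. subst t2. replace (t1 - t1) with 0 in E1 by ring. rewrite vscal_0 in E1.
      replace m1 with (vadd (vsub m1 m2) m2) by vring. rewrite E1. apply vadd_0l.
    - exfalso. apply He. replace e with (vscal (/ (t2 - t1)) (vsub m1 m2)).
      + apply Dscal, Dsub; auto.
      + rewrite E1, vscal_assoc. rewrite Rinv_l by lra. apply vscal_one. }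
  set (D' := fun v => exists m t, D m /\ v = vadd m (vscal t e)).
  set (z' := fun v => match excluded_middle_informative (exists mt : X * R, D (fst mt) /\ v = vadd (fst mt) (vscal (snd mt) e)) with
                      | left h => z (fst (proj1_sig (constructive_indefinite_description _ h))) +
                                  snd (proj1_sig (constructive_indefinite_description _ h)) * c
                      | right _ => 0 end).
  assert (z'eq : forall m t, D m -> z' (vadd m (vscal t e)) = z m + t * c).
  { intros m t Hm. unfold z'. destruct (excluded_middle_informative _) as [h|h].
    - destruct (constructive_indefinite_description _ h) as [[m1 t1] [Hm1 E]]. simpl in *.
      destruct (uniq m m1 t t1 Hm Hm1 E) as [-> ->]. reflexivity.
    - exfalso. apply h. exists (m, t). simpl. auto. }
  exists (D', z'). split; [|split].
  - split; [split; [|split]|split; [|split]]; simpl.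
    + exists vzero, 0. split; auto. vring.
    + intros v w [m1 [t1 [Hm1 ->]]] [m2 [t2 [Hm2 ->]]]. exists (vadd m1 m2), (t1 + t2). split; auto. vring.
    + intros r v [m1 [t1 [Hm1 ->]]]. exists (vscal r m1), (r * t1). split; auto. vring.
    + intros v w [m1 [t1 [Hm1 ->]]] [m2 [t2 [Hm2 ->]]].
      replace (vadd (vadd m1 (vscal t1 e)) (vadd m2 (vscal t2 e))) with (vadd (vadd m1 m2) (vscal (t1 + t2) e)) by vring.
      rewrite !z'eq, zadd by auto. ring.
    + intros r v [m1 [t1 [Hm1 ->]]].
      replace (vscal r (vadd m1 (vscal t1 e))) with (vadd (vscal r m1) (vscal (r * t1) e)) by vring.
      rewrite !z'eq, zscal by auto. ring.
    + intros v a [m [t [Hm ->]]] Ha. rewrite z'eq by exact Hm.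
      destruct (Rtotal_order t 0) as [Hn|[H0|Hp]].
      * pose proof (ci m (- t) a Hm ltac:(lra) Ha) as C. rewrite Ropp_involutive in C.
        apply Rmult_le_compat_l with (r := - t) in C; [|lra].
        unfold Rdiv in C. replace (- t * ((z m - Phi (vadd m (vscal t e)) a) * / - t)) with (z m - Phi (vadd m (vscal t e)) a) in C by (field; lra).
        lra.
      * subst t. replace (vadd m (vscal 0 e)) with m by vring. rewrite Rmult_0_l, Rplus_0_r. auto.
      * pose proof (cii m t a Hm Hp Ha) as C.
        apply Rmult_le_compat_l with (r := t) in C; [|lra].
        unfold Rdiv in C. replace (t * ((Phi (vadd m (vscal t e)) a - z m) * / t)) with (Phi (vadd m (vscal t e)) a - z m) in C by (field; lra).
        lra.
  - split; simpl.
    + intros v Hv. exists v, 0. split; auto. vring.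
    + intros v Hv. replace v with (vadd v (vscal 0 e)) at 2 by vring. rewrite z'eq by exact Hv. ring.
  - simpl. exists vzero, 1. split; auto. vring.
Qed.

Theorem hahn_banach {X : Banach} {A : Type} (Dom : A -> Prop) (cmb : R -> A -> A -> A) (Phi : X -> A -> R) (a0 : A)
  (Ha0 : Dom a0)
  (Hcmb : forall l a1 a2, 0 <= l <= 1 -> Dom a1 -> Dom a2 -> Dom (cmb l a1 a2))
  (Hcvx : forall l m1 m2 a1 a2, 0 <= l <= 1 -> Dom a1 -> Dom a2 ->
     Phi (vadd (vscal l m1) (vscal (1-l) m2)) (cmb l a1 a2) <= l * Phi m1 a1 + (1-l) * Phi m2 a2)
  (Hseed : forall a, Dom a -> 0 <= Phi vzero a) :
  exists z : X -> R, linf z /\ forall m a, Dom a -> z m <= Phi m a.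
Proof.
  set (T := {p : (X -> Prop) * (X -> R) | hbvalid Dom Phi p}).
  assert (v0 : hbvalid Dom Phi (fun v => v = vzero, fun _ => 0)).
  { split; [split; [|split]|split; [|split]]; simpl.
    - reflexivity.
    - intros v w -> ->. apply vadd_zero.
    - intros r v ->. apply vscal_zero.
    - intros; ring.
    - intros; ring.
    - intros m a -> Ha. auto. }
  set (t0 := exist _ _ v0 : T).
  set (le := fun p q : T => hble (proj1_sig p) (proj1_sig q)).
  destruct (zorn_pre T t0 le) as [t Ht].
  - intros p. split; auto.
  - intros p q r [H1 H2] [H3 H4]. split; intros v Hv; [auto|]. rewrite H2 by auto. auto.
  - intros Ch HCh.
    destruct (classic (exists p, Ch p)) as [[p0 Hp0]|HN].
    2: { exists t0. intros s Hs. exfalso. apply HN. eauto. }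
    set (DU := fun v => exists p : T, Ch p /\ fst (proj1_sig p) v).
    set (zU := fun v => match excluded_middle_informative (DU v) with
                        | left h => snd (proj1_sig (proj1_sig (constructive_indefinite_description _ h))) v
                        | right _ => 0 end).
    assert (zUe : forall p v, Ch p -> fst (proj1_sig p) v -> zU v = snd (proj1_sig p) v).
    { intros p v Hp Hv. unfold zU. destruct (excluded_middle_informative _) as [h|h].
      - destruct (constructive_indefinite_description _ h) as [q [Hq Hqv]]. simpl.
        destruct (HCh p q Hp Hq) as [[_ E]|[_ E]].
        + symmetry. auto.
        + auto.
      - exfalso. apply h. exists p. auto. }
    assert (big : forall p q v w, Ch p -> Ch q -> fst (proj1_sig p) v -> fst (proj1_sig q) w ->
       exists r : T, Ch r /\ fst (proj1_sig r) v /\ fst (proj1_sig r) w).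
    { intros p q v w Hp Hq Hv Hw. destruct (HCh p q Hp Hq) as [[E _]|[E _]].
      - exists q. auto.
      - exists p. auto. }
    assert (vU : hbvalid Dom Phi (DU, zU)).
    { split; [split; [|split]|split; [|split]]; simpl.
      - exists p0. split; [exact Hp0|]. destruct (proj2_sig p0) as [[S0 _] _]. exact S0.
      - intros v w [p [Hp Hv]] [q [Hq Hw]]. destruct (big p q v w Hp Hq Hv Hw) as [r [Hr [Hrv Hrw]]].
        exists r. split; [exact Hr|]. destruct (proj2_sig r) as [[_ [S1 _]] _]. auto.
      - intros r0 v [p [Hp Hv]]. exists p. split; [exact Hp|]. destruct (proj2_sig p) as [[_ [_ S2]] _]. auto.
      - intros v w [p [Hp Hv]] [q [Hq Hw]]. destruct (big p q v w Hp Hq Hv Hw) as [r [Hr [Hrv Hrw]]].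
        destruct (proj2_sig r) as [[_ [S1 _]] [Z1 _]].
        rewrite !(zUe r) by auto. auto.
      - intros r0 v [p [Hp Hv]]. destruct (proj2_sig p) as [[_ [_ S2]] [_ [Z2 _]]].
        rewrite !(zUe p) by auto. auto.
      - intros m a [p [Hp Hm]] Ha. destruct (proj2_sig p) as [_ [_ [_ Z3]]].
        rewrite (zUe p) by auto. auto. }
    exists (exist _ _ vU). intros s Hs. split; simpl.
    + intros v Hv. exists s. auto.
    + intros v Hv. symmetry. apply zUe; auto.
  - destruct t as [p Hv]. destruct p as [D z].
    assert (full : forall v, D v).
    { intros e. apply NNPP. intro He.
      destruct (hb_step Dom cmb Phi a0 Ha0 Hcmb Hcvx (D, z) e Hv He) as [q [Hq [Hle Hqe]]].
      destruct (Ht (exist _ q Hq) Hle) as [Hle' _]. apply He. exact (Hle' e Hqe). }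
    pose proof Hv as Hv2. destruct Hv2 as [_ [Z1 [Z2 Z3]]]. simpl in Z1, Z2, Z3.
    exists z. split; [split|]; auto.
Qed.

Lemma dual_bound {X : Banach} (phi : X -> R) : is_dual phi -> exists c, 0 <= c /\ forall x, Rabs (phi x) <= c * vnorm x.
Proof.
  intros [_ [_ [c Hc]]]. exists (Rmax c 0). split; [apply Rmax_r|].
  intros x. eapply Rle_trans; [apply Hc|]. apply Rmult_le_compat_r; [apply vnorm_nonneg|apply Rmax_l].
Qed.

Lemma lin_dual {X : Banach} (phi : X -> R) c : linf phi -> (forall x, Rabs (phi x) <= c * vnorm x) -> is_dual phi.
Proof. intros [H1 H2] H3. split; [exact H1|split; [exact H2|exists c; exact H3]]. Qed.


Lemma dsub_dual {X : Banach} (phi psi : X -> R) : is_dual phi -> is_dual psi -> is_dual (dsub phi psi).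
Proof.
  intros D1 D2. destruct (dual_bound _ D1) as [c1 [_ H1]]. destruct (dual_bound _ D2) as [c2 [_ H2]].
  apply lin_dual with (c1 + c2).
  - split; intros; unfold dsub; rewrite ?lin_add, ?lin_scal by (apply dual_lin; assumption); ring.
  - intros x. unfold dsub. unfold Rminus. eapply Rle_trans; [apply Rabs_triang|]. rewrite Rabs_Ropp.
    specialize (H1 x). specialize (H2 x). lra.
Qed.

Definition dscl {X : Banach} (r : R) (psi : X -> R) : X -> R := fun v => r * psi v.

Lemma dscl_dual {X : Banach} r (psi : X -> R) : is_dual psi -> is_dual (dscl r psi).
Proof.
  intros D. destruct (dual_bound _ D) as [c [_ H]].
  apply lin_dual with (Rabs r * c).
  - split; intros; unfold dscl; rewrite ?lin_add, ?lin_scal by (apply dual_lin; assumption); ring.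
  - intros x. unfold dscl. rewrite Rabs_mult, Rmult_assoc. apply Rmult_le_compat_l; [apply Rabs_pos|apply H].
Qed.

Lemma dnorm_le {X : Banach} (phi : X -> R) c' : is_dual phi -> 0 <= c' -> (forall x, Rabs (phi x) <= c' * vnorm x) ->
  exists c, dnorm phi = Fin c /\ c <= c'.
Proof.
  intros D H0 H. destruct (dnorm_spec phi D) as [c [E [_ [_ M]]]]. exists c. split; auto.
Qed.

Lemma norming {X : Banach} (e : X) : exists psi, is_dual psi /\ (forall w, Rabs (psi w) <= vnorm w) /\ psi e = vnorm e.
Proof.
  destruct (hahn_banach (X := X) (A := R) (fun _ => True) (fun l a b => l * a + (1 - l) * b)
     (fun m t => vnorm (vadd m (vscal t e)) - t * vnorm e) 0) as [z [Lz Hz]]; auto.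
  - intros l m1 m2 a1 a2 Hl _ _.
    replace (vadd (vadd (vscal l m1) (vscal (1 - l) m2)) (vscal (l * a1 + (1 - l) * a2) e))
      with (vadd (vscal l (vadd m1 (vscal a1 e))) (vscal (1 - l) (vadd m2 (vscal a2 e)))) by vring.
    pose proof (vnorm_triangle (vscal l (vadd m1 (vscal a1 e))) (vscal (1 - l) (vadd m2 (vscal a2 e)))) as T.
    rewrite !vnorm_scal, !Rabs_right in T by lra. nra.
  - intros a _. replace (vadd vzero (vscal a e)) with (vscal a e) by vring. rewrite vnorm_scal.
    pose proof (Rle_abs a). pose proof (vnorm_nonneg e). nra.
  - assert (Hle : forall w, z w <= vnorm w).
    { intros w. pose proof (Hz w 0 I). replace (vadd w (vscal 0 e)) with w in H by vring. lra. }
    exists z. split; [|split].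
    + apply lin_dual with 1; [exact Lz|]. intros x. rewrite Rmult_1_l. apply Rabs_le. split.
      * pose proof (Hle (vopp x)). rewrite lin_opp, vnorm_opp in H by exact Lz. lra.
      * apply Hle.
    + intros w. apply Rabs_le. split.
      * pose proof (Hle (vopp w)). rewrite lin_opp, vnorm_opp in H by exact Lz. lra.
      * apply Hle.
    + apply Rle_antisym; [apply Hle|].
      pose proof (Hz (vopp e) 1 I). replace (vadd (vopp e) (vscal 1 e)) with (@vzero X) in H by vring.
      rewrite vnorm_zero, lin_opp in H by exact Lz. lra.
Qed.

Definition fval (a : ER) : R := match a with Fin r => r | PInf => 0 end.

Lemma sum_rule {X : Banach} (F : X -> ER) (P : X -> R) (L : R) (u : X) (Fu : R) (phi : X -> R) :
  convexE F -> convexR P -> (forall v w, P v - P w <= L * vnorm (vsub v w)) -> F u = Fin Fu -> is_dual phi ->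
  (forall w Fw, F w = Fin Fw -> phi (vsub w u) <= Fw + P w - Fu - P u) ->
  exists z, is_dual z /\ (forall v, Rabs (z v) <= L * vnorm v) /\ subdiff F u (dsub phi z).
Proof.
  intros CF CP LP Fu_ Dphi Hsub. pose proof (dual_lin _ Dphi) as Lphi.
  destruct (hahn_banach (X := X) (A := X) (fun w => exists Fw, F (vadd u w) = Fin Fw)
     (fun l a b => vadd (vscal l a) (vscal (1 - l) b))
     (fun m w => P (vadd u (vadd m w)) - P u + fval (F (vadd u w)) - Fu - phi w) vzero) as [z [Lz Hz]].
  - exists Fu. replace (vadd u vzero) with u by vring. exact Fu_.
  - intros l a1 a2 Hl [F1 H1] [F2 H2].
    pose proof (CF _ _ _ _ l H1 H2 Hl) as C.
    replace (vadd (vscal l (vadd u a1)) (vscal (1 - l) (vadd u a2))) with (vadd u (vadd (vscal l a1) (vscal (1 - l) a2))) in C by vring.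
    destruct (F (vadd u (vadd (vscal l a1) (vscal (1 - l) a2)))) as [r|]; [eauto|contradiction].
  - intros l m1 m2 a1 a2 Hl [F1 H1] [F2 H2].
    pose proof (CF _ _ _ _ l H1 H2 Hl) as C.
    replace (vadd (vscal l (vadd u a1)) (vscal (1 - l) (vadd u a2))) with (vadd u (vadd (vscal l a1) (vscal (1 - l) a2))) in C by vring.
    pose proof (CP (vadd u (vadd m1 a1)) (vadd u (vadd m2 a2)) l Hl) as C2.
    replace (vadd (vscal l (vadd u (vadd m1 a1))) (vscal (1 - l) (vadd u (vadd m2 a2))))
      with (vadd u (vadd (vadd (vscal l m1) (vscal (1 - l) m2)) (vadd (vscal l a1) (vscal (1 - l) a2)))) in C2 by vring.
    rewrite H1, H2. simpl.
    destruct (F (vadd u (vadd (vscal l a1) (vscal (1 - l) a2)))) as [r|]; [|contradiction]. simpl in C |- *.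
    rewrite (lin_add phi), !(lin_scal phi) by exact Lphi. nra.
  - intros a [Fa Ha]. rewrite Ha. simpl.
    pose proof (Hsub _ _ Ha) as H. replace (vsub (vadd u a) u) with a in H by vring.
    replace (vadd u (vadd vzero a)) with (vadd u a) by vring. lra.
  - assert (Hle : forall m, z m <= L * vnorm m).
    { intros m. assert (D0 : exists Fw, F (vadd u vzero) = Fin Fw).
      { exists Fu. replace (vadd u vzero) with u by vring. exact Fu_. }
      pose proof (Hz m vzero D0) as H. replace (vadd u vzero) with u in H by vring.
      replace (vadd u (vadd m vzero)) with (vadd u m) in H by vring. rewrite Fu_, lin_zero in H by exact Lphi.
      simpl in H. pose proof (LP (vadd u m) u). replace (vsub (vadd u m) u) with m in H0 by vring. lra. }
    assert (Hb : forall v, Rabs (z v) <= L * vnorm v).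
    { intros v. apply Rabs_le. split.
      - pose proof (Hle (vopp v)). rewrite lin_opp, vnorm_opp in H by exact Lz. lra.
      - apply Hle. }
    assert (Dz : is_dual z) by (apply lin_dual with L; assumption).
    exists z. split; [exact Dz|split; [exact Hb|]].
    split; [apply dsub_dual; assumption|].
    exists Fu. split; [exact Fu_|]. intros w.
    destruct (F w) as [Fw|] eqn:HFw; [|trivial].
    set (a := vsub w u).
    assert (Da : exists Fw', F (vadd u a) = Fin Fw').
    { exists Fw. unfold a. replace (vadd u (vsub w u)) with w by vring. exact HFw. }
    pose proof (Hz (vopp a) a Da) as H.
    replace (vadd u (vadd (vopp a) a)) with u in H by vring.
    replace (vadd u a) with w in H by (unfold a; vring). rewrite HFw, lin_opp in H by exact Lz. simpl in H.
    unfold dsub. fold a. lra.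
Qed.

Lemma half_pow_small (y : R) : 0 < y -> exists N, forall n, (n >= N)%nat -> (/ 2) ^ n < y.
Proof.
  intros Hy. destruct (pow_lt_1_zero (/ 2) ltac:(rewrite Rabs_right; lra) y Hy) as [N HN].
  exists N. intros n Hn. specialize (HN n Hn). rewrite Rabs_right in HN; [exact HN|].
  apply Rle_ge, pow_le. lra.
Qed.

Lemma half_pow_pos n : 0 < (/ 2) ^ n.
Proof. apply pow_lt. lra. Qed.

Lemma elt_mid c0 a : elt (Fin c0) a -> exists c1, c0 < c1 /\ elt (Fin c1) a.
Proof.
  destruct a as [r|]; simpl; intros H.
  - exists ((c0 + r) / 2). split; lra.
  - exists (c0 + 1). split; [lra|exact I].
Qed.

Definition ekS {X : Banach} (G : X -> ER) (k : R) (y v : X) : Prop :=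
  exists gv, G v = Fin gv /\ gv + k * vnorm (vsub v y) <= fval (G y).

Definition ekgood {X : Banach} (G : X -> ER) (k : R) (y : X) (n : nat) (v : X) : Prop :=
  ekS G k y v /\ forall w gw, ekS G k y w -> G w = Fin gw -> fval (G v) <= gw + (/ 2) ^ n.

Lemma ekgood_ex {X : Banach} (G : X -> ER) k y gy n : 0 < k -> (forall v, ele (Fin 0) (G v)) -> G y = Fin gy ->
  exists v, ekgood G k y n v.
Proof.
  intros Hk H0 Hy.
  set (F := fun x => exists w, ekS G k y w /\ G w = Fin (- x)).
  assert (Fb : bound F). { exists 0. intros x [w [_ Hw]]. specialize (H0 w). rewrite Hw in H0. simpl in H0. lra. }
  assert (Fe : exists x, F x). { exists (- gy). exists y. rewrite Ropp_involutive. split; [|exact Hy].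
    exists gy. split; [exact Hy|]. rewrite vnorm_sub_zero, Hy. simpl. lra. }
  destruct (completeness F Fb Fe) as [l [Hl1 Hl2]].
  pose proof (half_pow_pos n) as Hp.
  assert (Ex : exists x, F x /\ l - (/ 2) ^ n < x).
  { apply NNPP. intro HN. assert (l <= l - (/ 2) ^ n); [|lra].
    apply Hl2. intros x Fx. apply Rnot_lt_le. intro. apply HN. eauto. }
  destruct Ex as [x [[w [Sw Gw]] Hx]].
  exists w. split; [exact Sw|]. intros w' gw' Sw' Gw'.
  assert (F (- gw')) by (exists w'; rewrite Ropp_involutive; auto).
  specialize (Hl1 _ H). rewrite Gw. simpl. lra.
Qed.

Lemma ekS_trans {X : Banach} (G : X -> ER) k y w v : 0 <= k -> ekS G k y w -> ekS G k w v -> ekS G k y v.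
Proof.
  intros Hk [gw [Gw Hw]] [gv [Gv Hv]]. rewrite Gw in Hv. simpl in Hv.
  exists gv. split; [exact Gv|]. pose proof (vnorm_sub_tri v w y). nra.
Qed.

Lemma ekeland {X : Banach} (G : X -> ER) (k : R) (x0 : X) (g0 : R) :
  0 < k -> (forall v, ele (Fin 0) (G v)) -> lscE G -> G x0 = Fin g0 ->
  exists z gz, G z = Fin gz /\ gz + k * vnorm (vsub z x0) <= g0 /\
     forall v gv, G v = Fin gv -> gz <= gv + k * vnorm (vsub v z).
Proof.
  intros Hk H0 Hlsc Hx0.
  set (next := fun y n => match excluded_middle_informative (exists v, ekgood G k y n v) with
                          | left h => proj1_sig (constructive_indefinite_description _ h)
                          | right _ => y end).
  set (xs := fix xs (n : nat) : X := match n with O => x0 | S n => next (xs n) n end).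
  assert (Inv : forall n, (exists gn, G (xs n) = Fin gn) /\ ekgood G k (xs n) n (xs (S n))).
  { assert (Fin_n : forall n, exists gn, G (xs n) = Fin gn).
    { induction n as [|n [gn IH]].
      - exists g0. exact Hx0.
      - simpl. unfold next at 1. destruct (excluded_middle_informative _) as [h|h].
        + destruct (proj2_sig (constructive_indefinite_description _ h)) as [[gv [Gv _]] _]. eauto.
        + eauto. }
    intros n. split; [apply Fin_n|]. destruct (Fin_n n) as [gn Hn].
    simpl. unfold next at 1. destruct (excluded_middle_informative _) as [h|h].
    - exact (proj2_sig (constructive_indefinite_description _ h)).
    - exfalso. apply h. eapply ekgood_ex; eauto. }
  assert (Srefl : forall y gy, G y = Fin gy -> ekS G k y y).
  { intros y gy Hy. exists gy. split; [exact Hy|]. rewrite vnorm_sub_zero, Hy. simpl. lra. }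

  assert (Chain : forall n m : nat, ekS G k (xs n) (xs (n + m)%nat)).
  { intros n m. induction m as [|m IH].
    - rewrite Nat.add_0_r. destruct (Inv n) as [[gn Hn] _]. eapply Srefl; eauto.
    - replace (n + S m)%nat with (S (n + m)) by lia.
      eapply ekS_trans; [lra|exact IH|]. exact (proj1 (proj2 (Inv (n + m)%nat))). }
  assert (Diam : forall n v, ekS G k (xs (S n)) v -> k * vnorm (vsub v (xs (S n))) <= (/ 2) ^ n).
  { intros n v Sv. destruct (Inv n) as [_ [S1 Hg]].
    assert (Sv' : ekS G k (xs n) v) by (eapply ekS_trans; [lra|exact S1|exact Sv]).
    destruct Sv as [gv [Gv Hv]]. specialize (Hg v gv Sv' Gv). lra. }
  assert (Cl : forall n m, (S n <= m)%nat -> vnorm (vsub (xs m) (xs (S n))) <= (/ 2) ^ n / k).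
  { intros n m Hm. replace m with (S n + (m - S n))%nat by lia.
    pose proof (Diam n _ (Chain (S n) (m - S n)%nat)).
    apply Rmult_le_reg_l with k; [exact Hk|]. unfold Rdiv. rewrite <- Rmult_assoc, (Rmult_comm k ((/ 2) ^ n)), Rmult_assoc, Rinv_r by lra. lra. }
  destruct (vcomplete xs) as [z Hz].
  { intros e He. destruct (half_pow_small (e * k / 2)) as [N0 HN0]. { apply Rmult_lt_0_compat; [nra|lra]. }
    exists (S N0). intros m n Hm Hn.
    pose proof (Cl N0 m Hm). pose proof (Cl N0 n Hn). pose proof (HN0 N0 (le_n _)).
    pose proof (vnorm_sub_tri (xs m) (xs (S N0)) (xs n)) as T2. rewrite (vnorm_sub_sym (xs (S N0)) (xs n)) in T2.
    assert ((/ 2) ^ N0 / k < e / 2).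
    { apply Rmult_lt_reg_l with k; [exact Hk|]. unfold Rdiv. rewrite <- Rmult_assoc, (Rmult_comm k ((/ 2) ^ N0)), Rmult_assoc, Rinv_r by lra. lra. }
    unfold vsub in *. lra. }
  assert (Zin : forall n, ekS G k (xs n) z).
  { intros n. apply NNPP. intros Hnot.
    destruct (Inv n) as [[gn Hgn] _].
    set (c0 := gn - k * vnorm (vsub z (xs n))).
    assert (Hc0 : elt (Fin c0) (G z)).
    { destruct (G z) as [gz|] eqn:Gz; simpl; [|exact I].
      apply Rnot_le_lt. intro Hle. apply Hnot. exists gz. split; [exact Gz|]. rewrite Hgn. simpl. unfold c0 in Hle. lra. }
    destruct (elt_mid _ _ Hc0) as [c1 [Hc01 Hc1]].
    destruct (Hlsc z c1 Hc1) as [d [Hd Hnb]].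
    destruct (Hz (Rmin d ((c1 - c0) / k))) as [N HN].
    { apply Rmin_pos; [exact Hd|]. unfold Rdiv. apply Rmult_lt_0_compat; [lra|apply Rinv_0_lt_compat; exact Hk]. }
    set (m := (n + N)%nat).
    specialize (HN m ltac:(unfold m; lia)).
    assert (Hm1 : vnorm (vsub (xs m) z) < d) by (eapply Rlt_le_trans; [exact HN|apply Rmin_l]).
    assert (Hm2 : vnorm (vsub (xs m) z) < (c1 - c0) / k) by (eapply Rlt_le_trans; [exact HN|apply Rmin_r]).
    specialize (Hnb (xs m) Hm1).
    destruct (Chain n N) as [gm [Gm Hgm]]. fold m in Gm, Hgm. rewrite Gm in Hnb. simpl in Hnb.
    rewrite Hgn in Hgm. simpl in Hgm.
    pose proof (vnorm_sub_tri z (xs m) (xs n)). rewrite (vnorm_sub_sym z (xs m)) in H.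
    assert (k * vnorm (vsub (xs m) z) < c1 - c0).
    { apply Rmult_lt_reg_l with (/ k). apply Rinv_0_lt_compat; exact Hk.
      rewrite <- Rmult_assoc, Rinv_l, Rmult_1_l by lra. rewrite Rmult_comm. exact Hm2. }
    unfold c0 in *. nra. }
  destruct (Zin 0%nat) as [gz [Gz Hgz]]. simpl in Hgz. rewrite Hx0 in Hgz. simpl in Hgz.
  exists z, gz. split; [exact Gz|]. split; [exact Hgz|].
  intros v gv Gv. apply Rnot_lt_le. intro Hlt.
  assert (Sv : ekS G k z v). { exists gv. split; [exact Gv|]. rewrite Gz. simpl. lra. }
  assert (Hv0 : vnorm (vsub v z) = 0).
  { apply NNPP. intro Hne. pose proof (vnorm_nonneg (vsub v z)) as Hnn.
    set (e := vnorm (vsub v z)).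
    assert (He : 0 < e) by (unfold e; lra).
    destruct (Hz (e / 2)) as [N HN]; [lra|].
    destruct (half_pow_small (k * e / 2)) as [N2 HN2]. { apply Rmult_lt_0_compat; [nra|lra]. }
    set (n := (N + N2)%nat).
    specialize (HN (S n) ltac:(unfold n; lia)). specialize (HN2 n ltac:(unfold n; lia)).
    pose proof (Diam n v (ekS_trans G k _ _ _ ltac:(lra) (Zin (S n)) Sv)).
    pose proof (vnorm_sub_tri v (xs (S n)) z) as T1.
    assert (T2 : vnorm (vsub v (xs (S n))) < e / 2).
    { apply Rmult_lt_reg_l with k; [exact Hk|]. lra. }
    fold e in T1. unfold vsub in *. lra. }
  apply vsub_eq0 in Hv0. subst v. rewrite Gz in Gv. injection Gv as ->.
  rewrite vnorm_sub_zero in Hlt. lra.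
Qed.

Lemma Rabs_le_inv (a b : R) : Rabs a <= b -> - b <= a <= b.
Proof. intros H. pose proof (Rle_abs a). pose proof (Rle_abs (- a)). rewrite Rabs_Ropp in H1. lra. Qed.

Lemma dzero_dual {X : Banach} : is_dual (@dzero X).
Proof. apply lin_dual with 0. split; intros; unfold dzero; ring. intros; unfold dzero; rewrite Rabs_R0; lra. Qed.

Lemma dnorm_ge0 {X : Banach} (phi : X -> R) : is_dual phi -> ele (Fin 0) (dnorm phi).
Proof. intros D. destruct (dnorm_spec phi D) as [c [-> [H _]]]. exact H. Qed.

Lemma elt_dnorm {X : Banach} (phi : X -> R) c' r : is_dual phi -> 0 <= c' -> c' < r ->
  (forall x, Rabs (phi x) <= c' * vnorm x) -> elt (dnorm phi) (Fin r).
Proof.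
  intros D H0 H1 H. destruct (dnorm_le phi c' D H0 H) as [c [-> Hc]]. simpl. lra.
Qed.

Lemma ddist0_le {X : Banach} (A : (X -> R) -> Prop) phi : (forall psi, A psi -> is_dual psi) -> A phi ->
  ele (ddist0 A) (dnorm phi).
Proof.
  intros HA Hphi. unfold ddist0. apply einf_le.
  - intros y [psi [Hpsi ->]]. apply dnorm_ge0. auto.
  - eauto.
Qed.

Lemma ddist0_ge0 {X : Banach} (A : (X -> R) -> Prop) : (forall psi, A psi -> is_dual psi) -> ele (Fin 0) (ddist0 A).
Proof.
  intros HA. unfold ddist0. apply einf_ge0. intros y [psi [Hpsi ->]]. apply dnorm_ge0. auto.
Qed.

Lemma subdiff_dual {X : Banach} (f : X -> ER) x psi : subdiff f x psi -> is_dual psi.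
Proof. intros [D _]. exact D. Qed.

Lemma bd_dual {X : Banach} (A : (X -> R) -> Prop) psi : dboundary A psi -> is_dual psi.
Proof. intros [[D _] _]. exact D. Qed.

Lemma subdiff_closed {X : Banach} (f : X -> ER) x psi : dclosure (subdiff f x) psi -> subdiff f x psi.
Proof.
  intros [Dpsi Hcl]. split; [exact Dpsi|].
  destruct (Hcl 1 ltac:(lra)) as [psi1 [[_ [fx [Hfx _]]] _]].
  exists fx. split; [exact Hfx|]. intros u. destruct (f u) as [fu|] eqn:Hfu; [|trivial].
  apply Rnot_lt_le. intro Hlt.
  set (d := psi (vsub u x) - (fu - fx)).
  pose proof (vnorm_nonneg (vsub u x)) as Hn.
  set (r := d / (vnorm (vsub u x) + 1)).
  assert (Hr : 0 < r) by (unfold r, d; apply Rdiv_lt_0_compat; lra).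
  destruct (Hcl r Hr) as [psi' [[D' [fx' [Hfx' Hsub]]] Hlt']].
  rewrite Hfx in Hfx'. injection Hfx' as <-.
  specialize (Hsub u). rewrite Hfu in Hsub.
  destruct (dnorm_spec _ (dsub_dual _ _ D' Dpsi)) as [c [Hc [Hc0 [Hb _]]]].
  rewrite Hc in Hlt'. simpl in Hlt'. specialize (Hb (vsub u x)). unfold dsub in Hb.
  apply Rabs_le_inv in Hb. destruct Hb as [Hb _].
  assert (c * vnorm (vsub u x) <= r * vnorm (vsub u x)) by (apply Rmult_le_compat_r; lra).
  assert (r * vnorm (vsub u x) < d).
  { unfold r. unfold Rdiv. rewrite Rmult_assoc, (Rmult_comm _ (vnorm _)).
    apply Rlt_le_trans with (d * 1); [|lra]. apply Rmult_lt_compat_l; [unfold d; lra|].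
    apply Rmult_lt_reg_r with (vnorm (vsub u x) + 1); [lra|].
    rewrite Rmult_assoc, Rinv_l by lra. lra. }
  unfold d in *. lra.
Qed.

Lemma interior_zero {X : Banach} (C : (X -> R) -> Prop) : dinterior C dzero -> exists r, 0 < r /\
  forall psi, is_dual psi -> (forall x, Rabs (psi x) <= (r / 2) * vnorm x) -> C psi.
Proof.
  intros [_ [r [Hr H]]]. exists r. split; [exact Hr|]. intros psi D Hb. apply H; [exact D|].
  apply elt_dnorm with (r / 2); [apply dsub_dual; [exact D|apply dzero_dual]|lra|lra|].
  intros x. unfold dsub, dzero. rewrite Rminus_0_r. apply Hb.
Qed.

Lemma ball_in {X : Banach} (f : X -> ER) x b : dinterior (subdiff f x) dzero -> ddist0 (dboundary (subdiff f x)) = Fin b ->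
  forall psi cp, is_dual psi -> dnorm psi = Fin cp -> cp < b -> subdiff f x psi.
Proof.
  intros Hint HT psi cp Dpsi Hcp Hlt.
  set (C := subdiff f x). fold C in Hint, HT.
  destruct (dnorm_spec psi Dpsi) as [cp' [Hcp' [Hcp0 [Hb _]]]]. rewrite Hcp in Hcp'. injection Hcp' as <-.
  destruct (interior_zero C Hint) as [r0 [Hr0 Hball]].
  set (E := fun t => 0 <= t <= 1 /\ C (dscl t psi)).
  assert (E0 : E 0).
  { split; [lra|]. apply Hball; [apply dscl_dual; exact Dpsi|]. intros y. unfold dscl. rewrite Rmult_0_l, Rabs_R0.
    pose proof (vnorm_nonneg y). nra. }
  assert (Eb : bound E) by (exists 1; intros t [Ht _]; lra).
  destruct (completeness E Eb (ex_intro _ 0 E0)) as [s0 [Hs1 Hs2]].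
  assert (Hs0 : 0 <= s0 <= 1) by (split; [apply Hs1; exact E0|apply Hs2; intros t [Ht _]; lra]).
  assert (Ds0 : is_dual (dscl s0 psi)) by (apply dscl_dual; exact Dpsi).
  assert (Hdiff : forall t s, Rabs (t - s) * cp < b -> True) by auto.
  assert (Bnd : forall t s w, Rabs (dsub (dscl t psi) (dscl s psi) w) <= (Rabs (t - s) * cp) * vnorm w).
  { intros t s w. unfold dsub, dscl. replace (t * psi w - s * psi w) with ((t - s) * psi w) by ring.
    rewrite Rabs_mult, Rmult_assoc. apply Rmult_le_compat_l; [apply Rabs_pos|apply Hb]. }
  assert (Hclos : dclosure C (dscl s0 psi)).
  { split; [exact Ds0|]. intros r Hr.
    assert (Hq : 0 < r / (cp + 1)) by (apply Rdiv_lt_0_compat; lra).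
    assert (Ex : exists t, E t /\ s0 - r / (cp + 1) < t).
    { apply NNPP. intro HN. assert (s0 <= s0 - r / (cp + 1)); [|lra].
      apply Hs2. intros t Et. apply Rnot_lt_le. intro. apply HN. eauto. }
    destruct Ex as [t [[Ht Ct] Hts]].
    assert (Hts2 : t <= s0) by (apply Hs1; split; assumption).
    exists (dscl t psi). split; [exact Ct|].
    apply elt_dnorm with (Rabs (t - s0) * cp).
    - apply dsub_dual; [apply dscl_dual; exact Dpsi|exact Ds0].
    - apply Rmult_le_pos; [apply Rabs_pos|lra].
    - rewrite Rabs_left1 by lra.
      apply Rle_lt_trans with (r / (cp + 1) * cp); [apply Rmult_le_compat_r; lra|].
      unfold Rdiv. rewrite Rmult_assoc. apply Rlt_le_trans with (r * 1); [|lra].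
      apply Rmult_lt_compat_l; [lra|]. apply Rmult_lt_reg_l with (cp + 1); [lra|].
      rewrite <- Rmult_assoc, Rinv_r by lra. lra.
    - apply Bnd. }
  assert (Cs0 : C (dscl s0 psi)) by (apply subdiff_closed; exact Hclos).
  destruct (classic (dinterior C (dscl s0 psi))) as [Hi|Hni].
  - destruct (Req_dec s0 1) as [E1|E1].
    + subst s0. replace psi with (dscl 1 psi); [exact Cs0|].
      apply functional_extensionality. intros; unfold dscl; ring.
    + exfalso. destruct Hi as [_ [r1 [Hr1 Hr1b]]].
      set (t := Rmin 1 (s0 + r1 / (2 * (cp + 1)))).
      assert (Hq : 0 < r1 / (2 * (cp + 1))) by (apply Rdiv_lt_0_compat; lra).
      assert (Ht1 : s0 < t) by (unfold t; apply Rmin_glb_lt; lra).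
      assert (Ht2 : t - s0 <= r1 / (2 * (cp + 1))) by (unfold t; pose proof (Rmin_r 1 (s0 + r1 / (2 * (cp + 1)))); lra).
      assert (Ct : C (dscl t psi)).
      { apply Hr1b; [apply dscl_dual; exact Dpsi|].
        apply elt_dnorm with (Rabs (t - s0) * cp).
        - apply dsub_dual; [apply dscl_dual; exact Dpsi|exact Ds0].
        - apply Rmult_le_pos; [apply Rabs_pos|lra].
        - rewrite Rabs_right by lra.
          apply Rle_lt_trans with (r1 / (2 * (cp + 1)) * cp); [apply Rmult_le_compat_r; lra|].
          unfold Rdiv. rewrite Rmult_assoc. apply Rlt_le_trans with (r1 * 1); [|lra].
          apply Rmult_lt_compat_l; [lra|]. apply Rmult_lt_reg_l with (2 * (cp + 1)); [lra|].
          rewrite <- Rmult_assoc, Rinv_r by lra. lra.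
        - apply Bnd. }
      assert (t <= s0) by (apply Hs1; split; [split; [lra|unfold t; apply Rmin_l]|exact Ct]). lra.
  - exfalso. assert (Hbd : dboundary C (dscl s0 psi)) by (split; assumption).
    pose proof (ddist0_le (dboundary C) _ (bd_dual C) Hbd) as Hle. rewrite HT in Hle.
    destruct (dnorm_le (dscl s0 psi) (s0 * cp) Ds0 ltac:(nra)) as [c [Hc Hcle]].
    { intros w. unfold dscl. rewrite Rabs_mult, Rabs_right by lra. rewrite Rmult_assoc. apply Rmult_le_compat_l; [lra|apply Hb]. }
    rewrite Hc in Hle. simpl in Hle. nra.
Qed.

Lemma ele_refl a : ele a a.
Proof. destruct a; simpl; [lra|trivial]. Qed.

Lemma sharp_from {X : Banach} (f : X -> ER) x fx T' : 0 <= T' -> f x = Fin fx ->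
  (forall psi, is_dual psi -> (forall w, Rabs (psi w) <= T' * vnorm w) -> subdiff f x psi) ->
  forall v fv, f v = Fin fv -> T' * vnorm (vsub v x) <= fv - fx.
Proof.
  intros HT Hfx H v fv Hfv.
  destruct (norming (vsub v x)) as [psi0 [D0 [B0 E0]]].
  assert (Hs : subdiff f x (dscl T' psi0)).
  { apply H; [apply dscl_dual; exact D0|]. intros w. unfold dscl. rewrite Rabs_mult, Rabs_right by lra.
    apply Rmult_le_compat_l; [lra|apply B0]. }
  destruct Hs as [_ [fx' [Hfx' Hsub]]]. rewrite Hfx in Hfx'. injection Hfx' as <-.
  specialize (Hsub v). rewrite Hfv in Hsub. unfold dscl in Hsub. rewrite E0 in Hsub. exact Hsub.
Qed.

Lemma p_lip {X : Banach} (p : X -> R) x xi : convexR p -> 0 <= xi ->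
  (forall u, Rabs (p u - p x) <= xi * vnorm (vsub u x)) -> forall v w, p v - p w <= xi * vnorm (vsub v w).
Proof.
  intros Cp Hxi Hcalm v w.
  set (K := Rabs (p x - p w + xi * vnorm (vsub w x))).
  assert (Key : forall t, 0 < t <= 1 -> p v - p w - xi * vnorm (vsub v w) <= t * K).
  { intros t Ht. set (a := vadd w (vscal (/ t) (vsub v w))).
    assert (Ev : v = vadd (vscal t a) (vscal (1 - t) w)) by (unfold a; vring; field; lra).
    pose proof (Cp a w t ltac:(lra)) as C. rewrite <- Ev in C.
    pose proof (Hcalm a) as Ca. apply Rabs_le_inv in Ca.
    assert (Na : vnorm (vsub a x) <= vnorm (vsub w x) + / t * vnorm (vsub v w)).
    { replace (vsub a x) with (vadd (vsub w x) (vscal (/ t) (vsub v w))) by (unfold a; vring).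
      eapply Rle_trans; [apply vnorm_triangle|]. rewrite vnorm_scal, Rabs_right; [lra|].
      left. apply Rinv_0_lt_compat. lra. }
    assert (HK : p x - p w + xi * vnorm (vsub w x) <= K) by apply Rle_abs.
    assert (p a <= p x + xi * vnorm (vsub w x) + xi * (/ t * vnorm (vsub v w))) by nra.
    assert (t * (xi * (/ t * vnorm (vsub v w))) = xi * vnorm (vsub v w)) by (field; lra).
    nra. }
  apply Rnot_lt_le. intro Hlt.
  set (D := p v - p w - xi * vnorm (vsub v w)).
  assert (HD : 0 < D) by (unfold D; lra).
  set (t := Rmin 1 (D / (2 * (K + 1)))).
  assert (HK0 : 0 <= K) by apply Rabs_pos.
  assert (Ht : 0 < t <= 1).
  { split; [apply Rmin_glb_lt; [lra|apply Rdiv_lt_0_compat; lra]|apply Rmin_l]. }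
  specialize (Key t Ht). fold D in Key.
  assert (t * K < D).
  { apply Rle_lt_trans with (D / (2 * (K + 1)) * K). apply Rmult_le_compat_r; [lra|apply Rmin_r].
    unfold Rdiv. rewrite Rmult_assoc. apply Rlt_le_trans with (D * 1); [|lra].
    apply Rmult_lt_compat_l; [lra|]. apply Rmult_lt_reg_l with (2 * (K + 1)); [lra|].
    rewrite <- Rmult_assoc, Rinv_r by lra. lra. }
  lra.
Qed.

Lemma conj1 {X : Banach} (f : X -> ER) (eps : R) :
  Gamma0 f -> 0 < eps -> elt (Fin eps) (bdsub f) ->
  forall g, Ptb f eps g ->
     forall u gu, g u = Fin gu -> 0 < gu ->
     forall phi, subdiff g u phi -> ele (esubR (bdsub f) eps) (dnorm phi).
Proof.
  intros [_ [Cf Lf]] Heps Hbd g [[s Hs] [p [Cp [Hg [x [xi [Hx0 [Hxi [Hptb Hcalm]]]]]]]]] u gu Hgu Hgu0 phi Hphi.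
  destruct (bdsub f) as [b|] eqn:Hb; [|simpl in Hptb; contradiction].
  simpl in Hbd.
  pose proof (p_lip p x xi Cp Hxi Hcalm) as Lp.
  rewrite Hg in Hgu. destruct (f u) as [fu|] eqn:Hfu; simpl in Hgu; [|discriminate]. injection Hgu as Hgu.
  destruct Hphi as [Dphi [gu' [Hgu' Hsubg]]]. rewrite Hg, Hfu in Hgu'. simpl in Hgu'. injection Hgu' as Hgu'.
  destruct (sum_rule f p xi u fu phi Cf Cp Lp Hfu Dphi) as [z [Dz [Bz Sy]]].
  { intros w Fw HFw. specialize (Hsubg w). rewrite Hg, HFw in Hsubg. simpl in Hsubg. lra. }
  destruct (dnorm_spec phi Dphi) as [cphi [Hcphi [Hcphi0 [Bphi _]]]]. rewrite Hcphi. simpl.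
  assert (By : forall w, Rabs (dsub phi z w) <= (cphi + xi) * vnorm w).
  { intros w. unfold dsub, Rminus. eapply Rle_trans; [apply Rabs_triang|]. rewrite Rabs_Ropp.
    specialize (Bphi w). specialize (Bz w). lra. }
  pose proof (Sy) as Sy'. destruct Sy' as [Dy [fu' [Hfu' Hsuby]]]. rewrite Hfu in Hfu'. injection Hfu' as <-.
  unfold tau in Hptb. destruct (excluded_middle_informative _) as [Hint|Hnint].
  -
    destruct (interior_zero _ Hint) as [r [Hr Hball]].
    assert (Sh0 := sharp_from f x 0 (r / 2) ltac:(lra) Hx0 Hball).
    assert (Uniq : forall v, f v = Fin 0 -> v = x).
    { intros v Hv. specialize (Sh0 v 0 Hv). apply vsub_eq0. pose proof (vnorm_nonneg (vsub v x)). nra. }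
    set (T := ddist0 (dboundary (subdiff f x))). fold T in Hptb.
    assert (HbT : Fin b = T).
    { rewrite <- Hb. unfold bdsub. apply ele_antisym.
      - apply einf_le.
        + intros y [x' [_ ->]]. apply ddist0_ge0. apply bd_dual.
        + exists x. split; [exact Hx0|reflexivity].
      - apply einf_ge.
        + intros y [x' [_ ->]]. apply ddist0_ge0. apply bd_dual.
        + intros y [x' [Hx' ->]]. rewrite (Uniq x' Hx'). apply ele_refl. }
    rewrite <- HbT in Hptb. simpl in Hptb.
    assert (ShT : forall T', 0 <= T' < b -> forall v fv, f v = Fin fv -> T' * vnorm (vsub v x) <= fv - 0).
    { intros T' HT'. apply sharp_from; [lra|exact Hx0|]. intros psi D B.
      destruct (dnorm_le psi T' D ltac:(lra) B) as [cp [Hcp Hcple]].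
      apply (ball_in f x b Hint (eq_sym HbT) psi cp D Hcp). lra. }
    apply Rnot_lt_le. intro Hlt.
    destruct (Req_dec (vnorm (vsub u x)) 0) as [H0|H0].
    + apply vsub_eq0 in H0. subst u. rewrite Hx0 in Hfu. injection Hfu as <-.
      unfold sublevel in Hs. rewrite Hg in Hs. destruct (f s) as [fs|] eqn:Hfs; simpl in Hs; [|contradiction].
      pose proof (ShT ((xi + b) / 2) ltac:(lra) s fs Hfs) as H1.
      pose proof (Hcalm s) as H2. apply Rabs_le_inv in H2.
      pose proof (vnorm_nonneg (vsub s x)). nra.
    + pose proof (vnorm_nonneg (vsub u x)) as Hn.
      specialize (Hsuby x). rewrite Hx0 in Hsuby.
      pose proof (By (vsub x u)) as H1. apply Rabs_le_inv in H1. rewrite vnorm_sub_sym in H1.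
      pose proof (ShT ((cphi + xi + b) / 2) ltac:(lra) u fu Hfu) as H2.
      assert (((cphi + xi + b) / 2 - (cphi + xi)) * vnorm (vsub u x) <= 0) by lra.
      assert (0 < ((cphi + xi + b) / 2 - (cphi + xi)) * vnorm (vsub u x)) by (apply Rmult_lt_0_compat; lra).
      lra.
  - set (E := fun y => exists u', ele (Fin (- xi * vnorm (vsub u' x) - Rabs (p x))) (f u') /\ y = ddist0 (subdiff f u')).
    fold E in Hptb.
    assert (Hreg : ele (Fin (- xi * vnorm (vsub u x) - Rabs (p x))) (f u)).
    { rewrite Hfu. simpl. pose proof (Hcalm u) as H1. apply Rabs_le_inv in H1. pose proof (Rle_abs (p x)). lra. }
    destruct (dnorm_le (dsub phi z) (cphi + xi) Dy ltac:(lra) By) as [cy [Hcy Hcyle]].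
    assert (Hle : ele (einf E) (Fin (cphi + xi))).
    { apply ele_trans with (ddist0 (subdiff f u)).
      - apply einf_le.
        + intros y [u' [_ ->]]. apply ddist0_ge0. intros psi; apply subdiff_dual.
        + exists u. split; [exact Hreg|reflexivity].
      - apply ele_trans with (dnorm (dsub phi z)).
        + apply ddist0_le; [intros psi; apply subdiff_dual|exact Sy].
        + rewrite Hcy. simpl. exact Hcyle. }
    destruct (einf E) as [tau0|]; simpl in Hle; [|contradiction]. simpl in Hptb. lra.
Qed.

Lemma ediv_ge0 a d : 0 < a -> ele (Fin 0) (ediv a d).
Proof.
  intros Ha. destruct d as [r|]; simpl; [|lra].
  destruct (Rlt_dec 0 r); simpl; [|trivial]. apply Rlt_le, Rdiv_lt_0_compat; assumption.
Qed.

Lemma Er_ge0 {X : Banach} (g : X -> ER) : (forall y, (exists x gx, g x = Fin gx /\ 0 < gx /\ y = ediv gx (Defs.dist x (sublevel g))) -> ele (Fin 0) y).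
Proof. intros y [x [gx [_ [Hgx ->]]]]. now apply ediv_ge0. Qed.

Lemma conj2 {X : Banach} (f : X -> ER) (eps : R) :
  Gamma0 f -> 0 < eps -> elt (Fin eps) (bdsub f) ->
  forall g, Ptb f eps g -> ele (esubR (bdsub f) eps) (Er g).
Proof.
  intros Gf Heps Hbd g Pg.
  pose proof (conj1 f eps Gf Heps Hbd g Pg) as C1.
  pose proof Gf as [_ [Cf Lf]].
  destruct Pg as [[s Hs] [p [Cp [Hg [x [xi [Hx0 [Hxi [Hptb Hcalm]]]]]]]]].
  destruct (bdsub f) as [b|] eqn:Hb; [|simpl in Hptb; contradiction].
  simpl in Hbd. change (ele (Fin (b + - eps)) (Er g)).
  pose proof (p_lip p x xi Cp Hxi Hcalm) as Lp.
  assert (Cg : convexE g).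
  { intros v w gv gw t Hv Hw Ht. rewrite Hg in Hv, Hw |- *.
    destruct (f v) as [fv|] eqn:Hfv; [|discriminate]. destruct (f w) as [fw|] eqn:Hfw; [|discriminate].
    simpl in Hv, Hw. injection Hv as <-. injection Hw as <-.
    pose proof (Cf v w fv fw t Hfv Hfw Ht) as C. pose proof (Cp v w t Ht) as C2.
    destruct (f (vadd (vscal t v) (vscal (1 - t) w))); simpl in C |- *; [lra|contradiction]. }
  assert (Lg : lscE g).
  { intros v c Hc. rewrite Hg in Hc.
    set (del := match f v with Fin fv => fv + p v - c | PInf => 1 end).
    assert (Hdel : 0 < del) by (unfold del; destruct (f v); simpl in Hc; lra).
    assert (Hf1 : elt (Fin (c - p v + del / 2)) (f v)) by (unfold del; destruct (f v); simpl in *; [lra|exact I]).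
    destruct (Lf v _ Hf1) as [d [Hd Hnb]].
    exists (Rmin d (del / (2 * (xi + 1)))). split.
    { apply Rmin_pos; [exact Hd|apply Rdiv_lt_0_compat; lra]. }
    intros u Hu. rewrite Hg.
    assert (Hu1 : vnorm (vsub u v) < d) by (eapply Rlt_le_trans; [exact Hu|apply Rmin_l]).
    assert (Hu2 : vnorm (vsub u v) < del / (2 * (xi + 1))) by (eapply Rlt_le_trans; [exact Hu|apply Rmin_r]).
    specialize (Hnb u Hu1). destruct (f u) as [fu|]; simpl in *; [|exact I].
    pose proof (Lp v u) as L1. rewrite vnorm_sub_sym in L1.
    assert (xi * vnorm (vsub u v) <= del / 2).
    { apply Rle_trans with ((xi + 1) * (del / (2 * (xi + 1)))).
      - pose proof (vnorm_nonneg (vsub u v)). nra.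
      - right. field. lra. }
    lra. }
  set (G := fun v => match g v with Fin a => Fin (Rmax a 0) | PInf => PInf end).
  assert (G0 : forall v, ele (Fin 0) (G v)) by (intros v; unfold G; destruct (g v); simpl; [apply Rmax_r|trivial]).
  assert (LG : lscE G).
  { intros v c Hc. destruct (Rlt_dec c 0) as [Hneg|Hnn].
    - exists 1. split; [lra|]. intros u _. specialize (G0 u). destruct (G u); simpl in *; [lra|trivial].
    - assert (Hc' : elt (Fin c) (g v)).
      { unfold G in Hc. destruct (g v) as [a|]; simpl in *; [|trivial].
        unfold Rmax in Hc. destruct (Rle_dec a 0); lra. }
      destruct (Lg v c Hc') as [d [Hd Hnb]]. exists d. split; [exact Hd|].
      intros u Hu. specialize (Hnb u Hu). unfold G. destruct (g u) as [a|]; simpl in *; [|trivial].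
      pose proof (Rmax_l a 0). lra. }
  unfold Er. apply einf_ge; [apply Er_ge0|].
  intros y [x1 [gx [Hgx [Hgx0 ->]]]].
  set (DS := fun y => exists s', sublevel g s' /\ y = Fin (vnorm (vsub s' x1))).
  assert (DS0 : forall y, DS y -> ele (Fin 0) y) by (intros y [s' [_ ->]]; apply vnorm_nonneg).
  pose proof (einf_spec DS DS0) as [DS1 DS2].
  unfold Defs.dist. fold DS.
  assert (Hs' : DS (Fin (vnorm (vsub s x1)))) by (exists s; auto).
  pose proof (DS1 _ Hs') as Hds. pose proof (DS2 _ DS0) as Hds0.
  destruct (einf DS) as [r|]; simpl in Hds; [|contradiction]. simpl in Hds0.
  simpl. destruct (Rlt_dec 0 r) as [Hr|Hr]; simpl; [|trivial].
  apply Rnot_lt_le. intro Hlt.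
  set (k := (gx / r + (b + - eps)) / 2).
  assert (Hgr : 0 < gx / r) by (apply Rdiv_lt_0_compat; assumption).
  assert (Hk : 0 < k) by (unfold k; lra).
  assert (Hkr : gx < k * r).
  { replace gx with (gx / r * r) at 1 by (field; lra).
    apply Rmult_lt_compat_r; [lra|]. unfold k. lra. }
  assert (HGx : G x1 = Fin gx) by (unfold G; rewrite Hgx; rewrite Rmax_left by lra; reflexivity).
  destruct (ekeland G k x1 gx Hk G0 LG HGx) as [z [gz' [HGz [Hz1 Hz2]]]].
  pose proof (vnorm_nonneg (vsub z x1)) as Hzn.
  assert (Hzx : vnorm (vsub z x1) < r).
  { assert (k * vnorm (vsub z x1) <= gx) by (pose proof (G0 z); rewrite HGz in H; simpl in H; lra).
    nra. }
  assert (Hnz : ~ sublevel g z).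
  { intro Hsz. assert (DS (Fin (vnorm (vsub z x1)))) by (exists z; auto).
    specialize (DS1 _ H). simpl in DS1. lra. }
  unfold G in HGz. destruct (g z) as [gz|] eqn:Hgz; [|discriminate]. injection HGz as HGz.
  unfold sublevel in Hnz. rewrite Hgz in Hnz. simpl in Hnz.
  assert (Hgz0 : 0 < gz) by lra. rewrite Rmax_left in HGz by lra. subst gz'.
  destruct (Lg z 0 ltac:(rewrite Hgz; simpl; lra)) as [d [Hd Hnb]].
  assert (Gmin : forall w gw, g w = Fin gw -> gz <= gw + k * vnorm (vsub w z)).
  { intros w gw Hgw.
    pose proof (vnorm_nonneg (vsub w z)) as Hwn.
    set (t := Rmin 1 (d / (2 * (vnorm (vsub w z) + 1)))).
    assert (Ht : 0 < t <= 1).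
    { split; [apply Rmin_glb_lt; [lra|apply Rdiv_lt_0_compat; lra]|apply Rmin_l]. }
    set (vt := vadd (vscal t w) (vscal (1 - t) z)).
    assert (Evt : vsub vt z = vscal t (vsub w z)) by (unfold vt; vring).
    assert (Nvt : vnorm (vsub vt z) = t * vnorm (vsub w z)) by (rewrite Evt, vnorm_scal, Rabs_right by lra; reflexivity).
    assert (Hvt : vnorm (vsub vt z) < d).
    { rewrite Nvt. apply Rle_lt_trans with (d / (2 * (vnorm (vsub w z) + 1)) * vnorm (vsub w z)).
      - apply Rmult_le_compat_r; [lra|apply Rmin_r].
      - unfold Rdiv. rewrite Rmult_assoc. apply Rlt_le_trans with (d * 1); [|lra].
        apply Rmult_lt_compat_l; [lra|]. apply Rmult_lt_reg_l with (2 * (vnorm (vsub w z) + 1)); [lra|].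
        rewrite <- Rmult_assoc, Rinv_r by lra. lra. }
    specialize (Hnb vt Hvt).
    pose proof (Cg w z gw gz t Hgw Hgz ltac:(lra)) as Cv. fold vt in Cv.
    destruct (g vt) as [a|] eqn:Hga; simpl in Cv, Hnb; [|contradiction].
    assert (HGa : G vt = Fin a) by (unfold G; rewrite Hga, Rmax_left by lra; reflexivity).
    specialize (Hz2 vt a HGa). rewrite Nvt in Hz2.
    assert (t * gz <= t * (gw + k * vnorm (vsub w z))) by nra.
    apply Rmult_le_reg_l with t; lra. }
  destruct (sum_rule g (fun w => k * vnorm (vsub w z)) k z gz dzero Cg) as [zz [Dzz [Bzz Szz]]].
  - intros v w t Ht. replace (vsub (vadd (vscal t v) (vscal (1 - t) w)) z) with
       (vadd (vscal t (vsub v z)) (vscal (1 - t) (vsub w z))) by vring.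
    pose proof (vnorm_triangle (vscal t (vsub v z)) (vscal (1 - t) (vsub w z))) as T.
    rewrite !vnorm_scal, !Rabs_right in T by lra. nra.
  - intros v w. pose proof (vnorm_sub_tri v w z). nra.
  - exact Hgz.
  - apply dzero_dual.
  - intros w gw Hgw. unfold dzero. rewrite vnorm_sub_zero. specialize (Gmin w gw Hgw). lra.
  - specialize (C1 z gz Hgz Hgz0 _ Szz). simpl in C1.
    destruct (dnorm_le (dsub dzero zz) k (dsub_dual _ _ dzero_dual Dzz) ltac:(lra)) as [c [Hc Hcle]].
    { intros w. unfold dsub, dzero. rewrite Rminus_0_l, Rabs_Ropp. apply Bzz. }
    rewrite Hc in C1. simpl in C1. unfold k in Hcle. lra.
Qed.

Theorem mainTheorem9 (X : Banach) (f : X -> ER) (eps : R) :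
  Gamma0 f ->
  (exists x, sublevel f x) ->
  0 < eps ->
  elt (Fin eps) (bdsub f) ->
  (forall g, Ptb f eps g ->
     forall u gu, g u = Fin gu -> 0 < gu ->
     forall phi, subdiff g u phi -> ele (esubR (bdsub f) eps) (dnorm phi)) /\
  ele (esubR (bdsub f) eps) (ErPtb f eps) /\
  elt (Fin 0) (esubR (bdsub f) eps).
Proof.
  intros Gf _ Heps Hbd. split; [|split].
  - exact (conj1 f eps Gf Heps Hbd).
  - unfold ErPtb. apply einf_ge.
    + intros y [g [_ ->]]. unfold Er. apply einf_ge0. apply Er_ge0.
    + intros y [g [Pg ->]]. exact (conj2 f eps Gf Heps Hbd g Pg).
  - destruct (bdsub f) as [b|]; simpl in *; [lra|trivial].
Qed.
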